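(* Let $G$ be a group, $N$ a normal subgroup, $\Gamma=G/N$. Let $d_2\colon\mathrm{H}^1(N)^G\to\mathrm{H}^2(\Gamma)$ be the transgression map of the five-term exact sequence $0\to\mathrm{H}^1(\Gamma)\to\mathrm{H}^1(G)\to\mathrm{H}^1(N)^G\xrightarrow{d_2}\mathrm{H}^2(\Gamma)\to\mathrm{H}^2(G)$. Assume that $\operatorname{Ker}(c^3_\Gamma\colon\mathrm{H}^3_b(\Gamma)\to\mathrm{H}^3(\Gamma))$ and $\mathrm{H}^2(\Gamma)/d_2(\mathrm{H}^1(N)^G)$ are both finite dimensional. Then for every normal subgroup $L$ of $G$ with $L\geqslant N$, $\dim_{\mathbb{R}}\mathcal{W}(G,L,N)<\infty$. In particular, if $\mathrm{H}^3_b(\Gamma)$ and $\mathrm{H}^2(\Gamma)$ are finite dimensional, then $\dim_{\mathbb{R}}\mathcal{W}(G,L,N)<\infty$ for every normal subgroup $L\geqslant N$ of $G$.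
   Context: All (bounded) cohomology is with trivial real coefficients; $\mathrm{H}^*_b$ is bounded cohomology (cohomology of bounded inhomogeneous cochains) and $c^n_\Gamma$ is the comparison map induced by inclusion of bounded cochains. $\mathrm{Q}(N)^G$: homogeneous quasimorphisms on $N$ invariant under $G$-conjugation; $\mathrm{H}^1(N)^G$: $G$-invariant homomorphisms $N\to\mathbb{R}$; $\mathcal{W}(G,L,N)=\mathrm{Q}(N)^G/(\mathrm{H}^1(N)^G+\{\psi|_N:\psi\in\mathrm{Q}(L)^G\})$. *)

(* Defs.v *)
From Stdlib Require Import Reals ZArith.
Open Scope R_scope.

Record Group := {
  carrier :> Type;
  gmul : carrier -> carrier -> carrier;
  ginv : carrier -> carrier;
  gone : carrier;
  gmulA : forall x y z, gmul x (gmul y z) = gmul (gmul x y) z;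
  gmul1g : forall x, gmul gone x = x;
  gmulVg : forall x, gmul (ginv x) x = gone }.

Arguments gmul {g}. Arguments ginv {g}. Arguments gone {g}.

Section Defs.
Variable G : Group.

Definition conj (g x : G) : G := gmul (gmul g x) (ginv g).

Fixpoint gpow (x : G) (n : nat) : G :=
  match n with O => gone | S n => gmul (gpow x n) x end.

Definition zpow (x : G) (z : Z) : G :=
  match z with
  | Z0 => gone
  | Zpos p => gpow x (Pos.to_nat p)
  | Zneg p => gpow (ginv x) (Pos.to_nat p)
  end.

Definition is_subgroup (N : G -> Prop) : Prop :=
  N gone /\ (forall x y, N x -> N y -> N (gmul x y)) /\
  (forall x, N x -> N (ginv x)).

Definition is_normal (N : G -> Prop) : Prop :=
  is_subgroup N /\ (forall g x, N x -> N (conj g x)).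

(* H^1(N)^G : G-invariant homomorphisms N -> R (functions G -> R read on N) *)
Definition invariant_hom (N : G -> Prop) (phi : G -> R) : Prop :=
  (forall x y, N x -> N y -> phi (gmul x y) = phi x + phi y) /\
  (forall g x, N x -> phi (conj g x) = phi x).

Definition invariant_hqm (N : G -> Prop) (psi : G -> R) : Prop :=
  (exists D, forall x y, N x -> N y ->
      Rabs (psi (gmul x y) - psi x - psi y) <= D) /\
  (forall x (z : Z), N x -> psi (zpow x z) = IZR z * psi x) /\
  (forall g x, N x -> psi (conj g x) = psi x).

(* inhomogeneous coboundaries, real trivial coefficients *)
Definition cob1 (f : G -> R) (g h : G) : R :=
  f h - f (gmul g h) + f g.
Definition cob2 (c : G -> G -> R) (g h k : G) : R :=
  c h k - c (gmul g h) k + c g (gmul h k) - c g h.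
Definition cob3 (c : G -> G -> G -> R) (g h k l : G) : R :=
  c h k l - c (gmul g h) k l + c g (gmul h k) l - c g h (gmul k l) + c g h k.

Definition cocycle2 (c : G -> G -> R) : Prop := forall g h k, cob2 c g h k = 0.
Definition cocycle3 (c : G -> G -> G -> R) : Prop :=
  forall g h k l, cob3 c g h k l = 0.
Definition bounded1 (f : G -> R) : Prop := exists M, forall g, Rabs (f g) <= M.
Definition bounded2 (c : G -> G -> R) : Prop :=
  exists M, forall g h, Rabs (c g h) <= M.
Definition bounded3 (c : G -> G -> G -> R) : Prop :=
  exists M, forall g h k, Rabs (c g h k) <= M.
End Defs.

Arguments conj {G}.

Fixpoint fsum (m : nat) (u : nat -> R) : R :=
  match m with O => 0 | S m => fsum m u + u m end.

(* Gamma = G/N, realised as a group with a surjective homomorphism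
   pi : G -> Gamma whose kernel is exactly N. *)
Definition quotient_map (G Gam : Group) (N : G -> Prop) (pi : G -> Gam) : Prop :=
  (forall x y, pi (gmul x y) = gmul (pi x) (pi y)) /\
  (forall y, exists x, pi x = y) /\
  (forall x, pi x = gone <-> N x).

(* t is a representative 2-cocycle of the transgression d_2(phi) of some
   phi in H^1(N)^G:  t(pi g, pi h) = (delta f)(g,h) for some f : G -> R with
   f(n g) = phi(n) + f(g) for n in N. *)
Definition in_transgression_image (G Gam : Group) (N : G -> Prop)
    (pi : G -> Gam) (t : Gam -> Gam -> R) : Prop :=
  exists phi : G -> R, invariant_hom G N phi /\
  exists f : G -> R,
    (forall n g, N n -> f (gmul n g) = phi n + f g) /\
    (forall g h, t (pi g) (pi h) = cob1 G f g h).

Definition findim_H2_mod_d2 (G Gam : Group) (N : G -> Prop) (pi : G -> Gam) : Prop :=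
  exists (m : nat) (c : nat -> Gam -> Gam -> R),
    (forall i, cocycle2 Gam (c i)) /\
    forall z, cocycle2 Gam z ->
      exists (a : nat -> R) (t : Gam -> Gam -> R) (b : Gam -> R),
        in_transgression_image G Gam N pi t /\
        forall g h, z g h = fsum m (fun i => a i * c i g h) + t g h + cob1 Gam b g h.

Definition findim_ker_c3 (Gam : Group) : Prop :=
  exists (m : nat) (c : nat -> Gam -> Gam -> Gam -> R),
    (forall i, bounded3 Gam (c i) /\ cocycle3 Gam (c i) /\
               exists u, forall g h k, c i g h k = cob2 Gam u g h k) /\
    forall z, bounded3 Gam z -> cocycle3 Gam z ->
      (exists u, forall g h k, z g h k = cob2 Gam u g h k) ->
      exists (a : nat -> R) (b : Gam -> Gam -> R), bounded2 Gam b /\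
        forall g h k, z g h k = fsum m (fun i => a i * c i g h k) + cob2 Gam b g h k.

Definition findim_H3b (Gam : Group) : Prop :=
  exists (m : nat) (c : nat -> Gam -> Gam -> Gam -> R),
    (forall i, bounded3 Gam (c i) /\ cocycle3 Gam (c i)) /\
    forall z, bounded3 Gam z -> cocycle3 Gam z ->
      exists (a : nat -> R) (b : Gam -> Gam -> R), bounded2 Gam b /\
        forall g h k, z g h k = fsum m (fun i => a i * c i g h k) + cob2 Gam b g h k.

Definition findim_H2 (Gam : Group) : Prop :=
  exists (m : nat) (c : nat -> Gam -> Gam -> R),
    (forall i, cocycle2 Gam (c i)) /\
    forall z, cocycle2 Gam z ->
      exists (a : nat -> R) (b : Gam -> R),
        forall g h, z g h = fsum m (fun i => a i * c i g h) + cob1 Gam b g h.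

(* dim W(G,L,N) = dim Q(N)^G / (H^1(N)^G + Q(L)^G|_N) < oo ;
   functions are compared on N only. *)
Definition findim_W (G : Group) (L N : G -> Prop) : Prop :=
  exists (m : nat) (psi : nat -> G -> R),
    (forall i, invariant_hqm G N (psi i)) /\
    forall psi0, invariant_hqm G N psi0 ->
      exists (a : nat -> R) (h phi : G -> R),
        invariant_hom G N h /\ invariant_hqm G L phi /\
        forall x, N x -> psi0 x = fsum m (fun i => a i * psi i x) + h x + phi x.

(* Main.v *)
Require Import Defs.
From Stdlib Require Import Reals Lra Lia ZArith ClassicalEpsilon FunctionalExtensionality Classical.
Open Scope R_scope.

Lemma abs_le_iff x a : Rabs x <= a <-> -a <= x <= a.
Proof.
  split.
  - intro H. pose proof (Rle_abs x). pose proof (Rle_abs (-x)). rewrite Rabs_Ropp in H1. lra.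
  - apply Rabs_le.
Qed.

Arguments gmulA {_}. Arguments gmul1g {_}. Arguments gmulVg {_}.
Section GroupLemmas.
Variable G : Group.
Implicit Types x y z : G.

Lemma mulgV x : gmul x (ginv x) = gone.
Proof.
  set (y := gmul x (ginv x)).
  assert (Hyy : gmul y y = y).
  { unfold y. rewrite <- (gmulA x (ginv x)), (gmulA (ginv x) x), gmulVg, gmul1g. reflexivity. }
  transitivity (gmul (gmul (ginv y) y) y).
  { rewrite gmulVg, gmul1g. reflexivity. }
  rewrite <- gmulA, Hyy. apply gmulVg.
Qed.

Lemma mulg1 x : gmul x gone = x.
Proof. rewrite <- (gmulVg x), gmulA, mulgV, gmul1g. reflexivity. Qed.

Lemma mulKg x y : gmul (ginv x) (gmul x y) = y.
Proof. rewrite gmulA, gmulVg, gmul1g. reflexivity. Qed.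

Lemma mulKVg x y : gmul x (gmul (ginv x) y) = y.
Proof. rewrite gmulA, mulgV, gmul1g. reflexivity. Qed.

Lemma inv_uniq x y : gmul x y = gone -> x = ginv y.
Proof. intro H. rewrite <- (mulg1 x), <- (mulgV y), gmulA, H, gmul1g. reflexivity. Qed.

Lemma ginv_mul x y : ginv (gmul x y) = gmul (ginv y) (ginv x).
Proof. symmetry. apply inv_uniq. rewrite <- gmulA, (gmulA (ginv x)), gmulVg, gmul1g, gmulVg. reflexivity. Qed.

Lemma ginv1 : ginv (@gone G) = gone.
Proof. symmetry. apply inv_uniq. apply gmul1g. Qed.

Lemma gpow_add x a b : gpow G x (a + b) = gmul (gpow G x a) (gpow G x b).
Proof.
  induction b; simpl.
  - rewrite Nat.add_0_r, mulg1. reflexivity.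
  - rewrite Nat.add_succ_r. simpl. rewrite IHb, gmulA. reflexivity.
Qed.

Lemma gpow_mul x a b : gpow G x (a * b) = gpow G (gpow G x a) b.
Proof.
  induction b; simpl.
  - rewrite Nat.mul_0_r. reflexivity.
  - rewrite Nat.mul_succ_r, gpow_add, IHb. reflexivity.
Qed.

Lemma gpow_one1 n : gpow G gone n = gone.
Proof. induction n; simpl; [reflexivity| rewrite IHn, gmul1g; reflexivity]. Qed.

Lemma gpow1 x : gpow G x 1 = x.
Proof. simpl. apply gmul1g. Qed.

Lemma gpow_comm x n : gmul x (gpow G x n) = gmul (gpow G x n) x.
Proof.
  rewrite <- (gpow1 x) at 1 4. rewrite <- !gpow_add, Nat.add_comm. reflexivity.
Qed.

Lemma gpow_inv x n : gpow G (ginv x) n = ginv (gpow G x n).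
Proof.
  induction n; simpl.
  - symmetry; apply ginv1.
  - rewrite IHn, <- ginv_mul, gpow_comm. reflexivity.
Qed.

Lemma gpow_conj g x n : gpow G (conj g x) n = conj g (gpow G x n).
Proof.
  unfold conj. induction n; simpl.
  - rewrite mulg1, mulgV. reflexivity.
  - rewrite IHn. rewrite <- !gmulA, (gmulA (ginv g)), gmulVg, gmul1g. reflexivity.
Qed.

Lemma zpow_of_nat x n : zpow G x (Z.of_nat n) = gpow G x n.
Proof.
  destruct n; simpl. reflexivity. rewrite SuccNat2Pos.id_succ. reflexivity.
Qed.

Lemma sub_gpow (N : G -> Prop) : is_subgroup G N -> forall x n, N x -> N (gpow G x n).
Proof.
  intros [H1 [H2 H3]] x n Hx. induction n; simpl; auto.
Qed.

End GroupLemmas.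

Lemma fsum_ext m u v : (forall i, (i < m)%nat -> u i = v i) -> fsum m u = fsum m v.
Proof.
  induction m; intro H; simpl; auto. rewrite IHm by (intros; apply H; lia). rewrite H by lia. reflexivity.
Qed.

Lemma fsum_lin m a u v : fsum m (fun i => a * u i + v i) = a * fsum m u + fsum m v.
Proof. induction m; simpl. ring. rewrite IHm. ring. Qed.

Lemma fsum_zero m : fsum m (fun _ => 0) = 0.
Proof. induction m; simpl. ring. rewrite IHm. ring. Qed.

Lemma fsum_zero' m (c : nat -> R) : fsum m (fun i => 0 * c i) = 0.
Proof. induction m; simpl. ring. rewrite IHm. ring. Qed.

Lemma fsum_split k1 k2 u : fsum (k1 + k2) u = fsum k1 u + fsum k2 (fun j => u (k1 + j)%nat).
Proof.
  induction k2; simpl. rewrite Nat.add_0_r. ring. rewrite Nat.add_succ_r. simpl. rewrite IHk2. ring.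
Qed.

Lemma span_lemma (X : Type) (V : (X -> R) -> Prop) :
  V (fun _ => 0) ->
  (forall v w a, V v -> V w -> V (fun x => a * v x + w x)) ->
  forall m (Rl : (X -> R) -> (nat -> R) -> Prop),
  (forall v w a b c, Rl v a -> Rl w b -> Rl (fun x => c * v x + w x) (fun i => c * a i + b i)) ->
  (forall v, V v -> exists a, Rl v a /\ forall i, (m <= i)%nat -> a i = 0) ->
  exists k (vs : nat -> X -> R), (forall j, V (vs j)) /\
    forall v, V v -> exists lam : nat -> R,
      Rl (fun x => v x - fsum k (fun j => lam j * vs j x)) (fun _ => 0).
Proof.
  intros V0 Vlin m. induction m as [|m IH]; intros Rl Rlin Htot.
  - exists 0%nat, (fun _ _ => 0). split; auto. intros v Hv.
    exists (fun _ => 0). destruct (Htot v Hv) as [a [Ha Hz]].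
    replace (fun x => v x - fsum 0 (fun j => 0 * 0)) with v.
    2:{ apply functional_extensionality; intro; simpl; ring. }
    replace (fun _ : nat => 0) with a. auto. apply functional_extensionality; intro; apply Hz; lia.
  - destruct (classic (exists vs a, V vs /\ Rl vs a /\ (forall i, (S m <= i)%nat -> a i = 0) /\ a m <> 0))
      as [[vs [as_ [Vs [Rs [Zs Ns]]]]] | Hno].
    + set (Rl' := fun v a => exists t, Rl (fun x => v x - t * vs x) a).
      destruct (IH Rl') as [k [ws [Vws Hws]]].
      * intros v w a b c [t Ht] [s Hs]. exists (c * t + s).
        pose proof (Rlin _ _ _ _ c Ht Hs) as H.
        replace (fun x => c * v x + w x - (c * t + s) * vs x)
          with (fun x => c * (v x - t * vs x) + (w x - s * vs x)). exact H.
        apply functional_extensionality; intro; ring.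
      * intros v Hv. destruct (Htot v Hv) as [a [Ha Hz]].
        set (t := a m / as_ m).
        exists (fun i => - t * as_ i + a i). split.
        -- exists t. pose proof (Rlin _ _ _ _ (-t) Rs Ha) as H.
           replace (fun x => v x - t * vs x) with (fun x => - t * vs x + v x). exact H.
           apply functional_extensionality; intro; ring.
        -- intros i Hi. destruct (Nat.eq_dec i m) as [->|Hne].
           ++ unfold t. field. exact Ns.
           ++ rewrite Zs, Hz by lia. ring.
      * exists (S k), (fun j => if Nat.eqb j k then vs else ws j). split.
        -- intro j. destruct (Nat.eqb j k); auto.
        -- intros v Hv. destruct (Hws v Hv) as [lam [t Ht]].
           exists (fun j => if Nat.eqb j k then t else lam j).
           replace (fun x => v x - fsum (S k) (fun j => (if Nat.eqb j k then t else lam j) *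
                       (if Nat.eqb j k then vs else ws j) x))
             with (fun x => v x - fsum k (fun j => lam j * ws j x) - t * vs x). exact Ht.
           apply functional_extensionality; intro x. simpl. rewrite Nat.eqb_refl.
           rewrite (fsum_ext k (fun j => (if Nat.eqb j k then t else lam j) * (if Nat.eqb j k then vs else ws j) x) (fun j => lam j * ws j x)). ring.
           intros i Hi. assert (Nat.eqb i k = false) as E by (apply Nat.eqb_neq; lia). rewrite E. reflexivity.
    + apply IH; auto. intros v Hv. destruct (Htot v Hv) as [a [Ha Hz]].
      exists a. split; auto. intros i Hi. destruct (Nat.eq_dec i m) as [->|Hne].
      * apply NNPP. intro Hn. apply Hno. exists v, a. auto.
      * apply Hz. lia.
Qed.

Lemma INR_lt_pow2 n : INR n < 2 ^ n.
Proof.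
  induction n. simpl; lra. rewrite S_INR. simpl.
  assert (1 <= 2 ^ n) by (apply pow_R1_Rle; lra). lra.
Qed.

Lemma zero_lemma d C : (forall n, Rabs d * 2 ^ n <= C) -> d = 0.
Proof.
  intro H. destruct (Req_dec d 0) as [|Hd]; auto. exfalso.
  assert (Hp : Rabs d > 0) by (apply Rabs_pos_lt; auto).
  destruct (INR_unbounded (C / Rabs d)) as [n Hn].
  specialize (H n). pose proof (INR_lt_pow2 n).
  assert (C / Rabs d < 2 ^ n) by lra.
  assert (C < Rabs d * 2 ^ n).
  { apply (Rmult_lt_compat_l (Rabs d)) in H1; auto. unfold Rdiv in H1.
    rewrite <- Rmult_assoc, (Rmult_comm (Rabs d) C), Rmult_assoc, Rinv_r in H1 by lra. lra. }
  lra.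
Qed.

Definition Lim2P (x : nat -> R) (l : R) := exists K, forall n, Rabs (l * 2 ^ n - x n) <= K.
Definition Lim2 (x : nat -> R) : R := epsilon (inhabits 0) (Lim2P x).

Lemma Lim2_uniq x l1 l2 : Lim2P x l1 -> Lim2P x l2 -> l1 = l2.
Proof.
  intros [K1 H1] [K2 H2].
  assert (l1 - l2 = 0); [|lra].
  apply (zero_lemma _ (K1 + K2)). intro n.
  specialize (H1 n); specialize (H2 n).
  assert (Hp : 0 < 2 ^ n) by (apply pow_lt; lra).
  rewrite <- (Rabs_pos_eq (2 ^ n)) by lra. rewrite <- Rabs_mult.
  replace ((l1 - l2) * 2 ^ n) with ((l1 * 2 ^ n - x n) - (l2 * 2 ^ n - x n)) by ring.
  apply abs_le_iff in H1; apply abs_le_iff in H2. apply abs_le_iff. lra.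
Qed.

Lemma Lim2_char x l : Lim2P x l -> Lim2 x = l.
Proof.
  intro H. apply Lim2_uniq with x; auto. unfold Lim2. apply epsilon_spec. eauto.
Qed.

Lemma Lim2_spec x D : (forall n, Rabs (x (S n) - 2 * x n) <= D) ->
  forall n, Rabs (Lim2 x * 2 ^ n - x n) <= D.
Proof.
  intro HD.
  assert (D0 : 0 <= D) by (eapply Rle_trans; [apply Rabs_pos| apply (HD 0%nat)]).
  set (b := fun n => (x n - D) / 2 ^ n).
  set (c := fun n => (x n + D) / 2 ^ n).
  assert (Hp : forall n, 0 < 2 ^ n) by (intro; apply pow_lt; lra).
  assert (bS : forall n, b n <= b (S n)).
  { intro n. unfold b. specialize (HD n). apply abs_le_iff in HD. specialize (Hp n).
    simpl. assert (0 <= (x (S n) - D) / (2 * 2 ^ n) - (x n - D) / 2 ^ n); [|lra].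
    replace ((x (S n) - D) / (2 * 2 ^ n) - (x n - D) / 2 ^ n) with ((x (S n) - 2 * x n + D) * / (2 * 2 ^ n)) by (field; lra).
    apply Rmult_le_pos; [lra|]. left. apply Rinv_0_lt_compat. lra. }
  assert (cS : forall n, c (S n) <= c n).
  { intro n. unfold c. specialize (HD n). apply abs_le_iff in HD. specialize (Hp n).
    simpl. assert (0 <= (x n + D) / 2 ^ n - (x (S n) + D) / (2 * 2 ^ n)); [|lra].
    replace ((x n + D) / 2 ^ n - (x (S n) + D) / (2 * 2 ^ n)) with ((2 * x n - x (S n) + D) * / (2 * 2 ^ n)) by (field; lra).
    apply Rmult_le_pos; [lra|]. left. apply Rinv_0_lt_compat. lra. }
  assert (bm : forall n m, (n <= m)%nat -> b n <= b m).
  { intros n m H. induction H. lra. specialize (bS m). lra. }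
  assert (cm : forall n m, (n <= m)%nat -> c m <= c n).
  { intros n m H. induction H. lra. specialize (cS m). lra. }
  assert (bc : forall n, b n <= c n).
  { intro n. unfold b, c. unfold Rdiv. apply Rmult_le_compat_r. left; apply Rinv_0_lt_compat, Hp. lra. }
  assert (bc2 : forall n m, b n <= c m).
  { intros n m. specialize (bm n (Nat.max n m) ltac:(lia)). specialize (cm m (Nat.max n m) ltac:(lia)).
    specialize (bc (Nat.max n m)). lra. }
  set (E := fun r => exists n, r = b n).
  destruct (completeness E) as [l [Hub Hlub]].
  { exists (c 0%nat). intros r [n ->]. apply bc2. }
  { exists (b 0%nat). exists 0%nat. reflexivity. }
  assert (Hl1 : forall n, b n <= l) by (intro n; apply Hub; exists n; reflexivity).
  assert (Hl2 : forall n, l <= c n) by (intro n; apply Hlub; intros r [m ->]; apply bc2).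
  assert (Hn : forall n, Rabs (l * 2 ^ n - x n) <= D).
  { intro n. specialize (Hl1 n); specialize (Hl2 n). specialize (Hp n). unfold b, c in *.
    apply (Rmult_le_compat_r (2 ^ n)) in Hl1; [|lra]. apply (Rmult_le_compat_r (2 ^ n)) in Hl2; [|lra].
    unfold Rdiv in *. rewrite Rmult_assoc, Rinv_l in Hl1, Hl2 by lra.
    apply abs_le_iff. lra. }
  rewrite (Lim2_char x l); auto. exists D; auto.
Qed.

Arguments gmulA {_}. Arguments gmul1g {_}. Arguments gmulVg {_}.

Section Homog.
Variable G : Group.
Variable F : G -> R.
Variable D : R.
Hypothesis hF : forall x y, Rabs (F (gmul x y) - F x - F y) <= D.

Definition Hb (g : G) : R := Lim2 (fun n => F (gpow G g (2 ^ n)%nat)).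

Lemma hb_approx g n : Rabs (Hb g * 2 ^ n - F (gpow G g (2 ^ n)%nat)) <= D.
Proof.
  apply (Lim2_spec (fun n => F (gpow G g (2 ^ n)%nat))). intro m.
  replace (2 ^ S m)%nat with (2 ^ m * 2)%nat by (simpl; lia).
  rewrite gpow_mul. simpl. rewrite gmul1g.
  replace (F (gmul (gpow G g (2 ^ m)) (gpow G g (2 ^ m))) - 2 * F (gpow G g (2 ^ m)))
    with (F (gmul (gpow G g (2 ^ m)) (gpow G g (2 ^ m))) - F (gpow G g (2 ^ m)) - F (gpow G g (2 ^ m))) by ring.
  apply hF.
Qed.

Lemma hb_char g v : (exists K, forall n, Rabs (v * 2 ^ n - F (gpow G g (2 ^ n)%nat)) <= K) -> Hb g = v.
Proof. intro H. apply Lim2_char. exact H. Qed.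

Lemma hb_close g : Rabs (Hb g - F g) <= D.
Proof.
  pose proof (hb_approx g 0). simpl in H. rewrite gmul1g, Rmult_1_r in H. exact H.
Qed.

Lemma hb_qm x y : Rabs (Hb (gmul x y) - Hb x - Hb y) <= 4 * D.
Proof.
  pose proof (hb_close (gmul x y)). pose proof (hb_close x). pose proof (hb_close y).
  pose proof (hF x y). apply abs_le_iff in H, H0, H1, H2. apply abs_le_iff. lra.
Qed.

Lemma F_one : Rabs (F gone) <= D.
Proof.
  pose proof (hF gone gone). rewrite gmul1g in H.
  replace (F gone - F gone - F gone) with (- F gone) in H by ring. rewrite Rabs_Ropp in H. exact H.
Qed.

Lemma F_pow y k : Rabs (F (gpow G y k) - INR k * F y) <= INR k * D + D.
Proof.
  induction k. simpl. replace (F gone - 0 * F y) with (F gone) by ring. pose proof F_one. lra.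
  rewrite S_INR. simpl gpow. pose proof (hF (gpow G y k) y).
  apply abs_le_iff in H, IHk. apply abs_le_iff. lra.
Qed.

Lemma hb_pow g k : Hb (gpow G g k) = INR k * Hb g.
Proof.
  apply hb_char. exists (INR k * D + (INR k * D + D)). intro n.
  rewrite <- gpow_mul, Nat.mul_comm, gpow_mul.
  set (y := gpow G g (2 ^ n)).
  pose proof (hb_approx g n) as H1. fold y in H1. pose proof (F_pow y k) as H2.
  pose proof (pos_INR k) as Hk.
  replace (INR k * Hb g * 2 ^ n - F (gpow G y k)) with
    (INR k * (Hb g * 2 ^ n - F y) - (F (gpow G y k) - INR k * F y)) by ring.
  eapply Rle_trans. unfold Rminus. apply Rabs_triang. rewrite Rabs_Ropp, Rabs_mult, Rabs_pos_eq by auto.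
  apply Rplus_le_compat; auto. apply Rmult_le_compat_l; auto.
Qed.

Lemma hb_inv g : Hb (ginv g) = - Hb g.
Proof.
  apply hb_char. exists (D + (D + Rabs (F gone))). intro n.
  rewrite gpow_inv. set (y := gpow G g (2 ^ n)).
  pose proof (hb_approx g n) as H1. fold y in H1.
  pose proof (hF (ginv y) y) as H2. rewrite gmulVg in H2.
  pose proof (Rle_abs (F gone)). pose proof (Rle_abs (- F gone)). rewrite Rabs_Ropp in H0.
  apply abs_le_iff in H1, H2. apply abs_le_iff. lra.
Qed.

Lemma hb_conj h g : Hb (conj h g) = Hb g.
Proof.
  apply hb_char. exists (D + (2 * D + Rabs (F h) + Rabs (F (ginv h)))). intro n.
  rewrite gpow_conj. set (y := gpow G g (2 ^ n)).
  pose proof (hb_approx g n) as H1. fold y in H1. unfold conj.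
  pose proof (hF (gmul h y) (ginv h)) as H2. pose proof (hF h y) as H3.
  pose proof (Rle_abs (F h)). pose proof (Rle_abs (- F h)). rewrite Rabs_Ropp in H0.
  pose proof (Rle_abs (F (ginv h))). pose proof (Rle_abs (- F (ginv h))). rewrite Rabs_Ropp in H5.
  apply abs_le_iff in H1, H2, H3. apply abs_le_iff. lra.
Qed.

Lemma hb_zpow g z : Hb (zpow G g z) = IZR z * Hb g.
Proof.
  destruct z; simpl.
  - pose proof (hb_pow g 0). simpl in H. rewrite H. ring.
  - rewrite hb_pow. rewrite INR_IZR_INZ, positive_nat_Z. reflexivity.
  - rewrite hb_pow, hb_inv. rewrite INR_IZR_INZ, positive_nat_Z.
    replace (Z.neg p) with (- Z.pos p)%Z by reflexivity. rewrite opp_IZR. ring.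
Qed.

Lemma hb_hqm (L : G -> Prop) : invariant_hqm G L Hb.
Proof.
  split; [|split].
  - exists (4 * D). intros; apply hb_qm.
  - intros; apply hb_zpow.
  - intros; apply hb_conj.
Qed.

End Homog.
Arguments gmulA {_}. Arguments gmul1g {_}. Arguments gmulVg {_}.

Section Hom.
Variables G Gam : Group.
Variable pi : G -> Gam.
Hypothesis pihom : forall x y, pi (gmul x y) = gmul (pi x) (pi y).

Lemma pi_one : pi gone = gone.
Proof.
  pose proof (pihom gone gone) as H. rewrite gmul1g in H.
  rewrite <- (mulKg _ (pi gone) (pi gone)), <- H, gmulVg. reflexivity.
Qed.

Lemma pi_inv x : pi (ginv x) = ginv (pi x).
Proof. apply inv_uniq. rewrite <- pihom, gmulVg. apply pi_one. Qed.
End Hom.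

Section Main.
Variables G Gam : Group.
Variable N : G -> Prop.
Variable pi : G -> Gam.
Hypothesis hN : is_normal G N.
Hypothesis hpi : quotient_map G Gam N pi.

Let pihom : forall x y, pi (gmul x y) = gmul (pi x) (pi y) := proj1 hpi.
Let surj : forall y, exists x, pi x = y := proj1 (proj2 hpi).
Let ker : forall x, pi x = gone <-> N x := proj2 (proj2 hpi).

Definition sec (y : Gam) : G := epsilon (inhabits gone) (fun x => pi x = y).
Lemma pi_sec y : pi (sec y) = y.
Proof. unfold sec. apply (epsilon_spec (inhabits gone) (fun x => pi x = y)). apply surj. Qed.

Definition ng (g : G) : G := gmul g (ginv (sec (pi g))).
Definition cc (a b : Gam) : G := gmul (gmul (sec a) (sec b)) (ginv (sec (gmul a b))).
Definition fpsi (psi : G -> R) (g : G) : R := psi (ng g).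
Definition upsi (psi : G -> R) (a b : Gam) : R := psi (cc a b).

Lemma N_ng g : N (ng g).
Proof.
  apply ker. unfold ng. rewrite pihom, (pi_inv _ _ _ pihom), pi_sec. apply mulgV.
Qed.

Lemma N_cc a b : N (cc a b).
Proof.
  apply ker. unfold cc. rewrite !pihom, (pi_inv _ _ _ pihom), !pi_sec. apply mulgV.
Qed.

Lemma ng_mul g h : ng (gmul g h) = gmul (gmul (ng g) (conj (sec (pi g)) (ng h))) (cc (pi g) (pi h)).
Proof.
  unfold ng, cc, conj. rewrite pihom. rewrite <- !gmulA, !mulKg. reflexivity.
Qed.

Lemma N_conj g x : N x -> N (conj g x).
Proof. destruct hN as [_ H]. apply H. Qed.
Lemma N_mul x y : N x -> N y -> N (gmul x y).
Proof. destruct hN as [[_ [H _]] _]. apply H. Qed.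
Lemma N_inv x : N x -> N (ginv x).
Proof. destruct hN as [[_ [_ H]] _]. apply H. Qed.
Lemma N_one : N gone.
Proof. destruct hN as [[H _] _]. apply H. Qed.

Definition beta (psi : G -> R) (g h : G) : R := cob1 G (fpsi psi) g h + upsi psi (pi g) (pi h).

Lemma beta_bound psi D : (forall x y, N x -> N y -> Rabs (psi (gmul x y) - psi x - psi y) <= D) ->
  (forall g x, N x -> psi (conj g x) = psi x) ->
  forall g h, Rabs (beta psi g h) <= 2 * D.
Proof.
  intros HD Hinv g h. unfold beta, cob1, fpsi, upsi. rewrite ng_mul.
  pose proof (HD _ _ (N_mul _ _ (N_ng g) (N_conj (sec (pi g)) _ (N_ng h))) (N_cc (pi g) (pi h))) as H1.
  pose proof (HD _ _ (N_ng g) (N_conj (sec (pi g)) _ (N_ng h))) as H2.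
  rewrite Hinv in H2 by apply N_ng.
  apply abs_le_iff in H1, H2. apply abs_le_iff. lra.
Qed.

Lemma cob2_cob1 (H : Group) (f : H -> R) g h k : cob2 H (cob1 H f) g h k = 0.
Proof. unfold cob2, cob1. rewrite !gmulA. ring. Qed.

Lemma cob3_cob2 (H : Group) (u : H -> H -> R) g h k l : cob3 H (cob2 H u) g h k l = 0.
Proof. unfold cob3, cob2. rewrite !gmulA. ring. Qed.

Lemma cob2_u_beta psi g h k :
  cob2 Gam (upsi psi) (pi g) (pi h) (pi k) = cob2 G (beta psi) g h k.
Proof.
  pose proof (cob2_cob1 G (fpsi psi) g h k) as E.
  unfold cob2, beta in *. rewrite !pihom. unfold cob1 in *. lra.
Qed.

Lemma cob2_u_bound psi D : (forall x y, N x -> N y -> Rabs (psi (gmul x y) - psi x - psi y) <= D) ->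
  (forall g x, N x -> psi (conj g x) = psi x) ->
  forall a b c, Rabs (cob2 Gam (upsi psi) a b c) <= 8 * D.
Proof.
  intros HD Hinv a b c.
  destruct (surj a) as [g <-]. destruct (surj b) as [h <-]. destruct (surj c) as [k <-].
  rewrite cob2_u_beta. unfold cob2.
  pose proof (beta_bound psi D HD Hinv) as B.
  pose proof (B h k). pose proof (B (gmul g h) k). pose proof (B g (gmul h k)). pose proof (B g h).
  apply abs_le_iff in H, H0, H1, H2. apply abs_le_iff. lra.
Qed.

End Main.
Arguments gmulA {_}. Arguments gmul1g {_}. Arguments gmulVg {_}.

Lemma INR_pow2 n : INR (2 ^ n)%nat = 2 ^ n.
Proof. rewrite pow_INR. replace (INR 2) with 2 by (simpl; ring). reflexivity. Qed.

Section Fin.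
Variables G Gam : Group.
Variable N : G -> Prop.
Variable pi : G -> Gam.
Hypothesis hN : is_normal G N.
Hypothesis hpi : quotient_map G Gam N pi.

Lemma hom_one phi : invariant_hom G N phi -> phi gone = 0.
Proof.
  intros [Ha _]. pose proof (Ha gone gone (N_one _ N hN) (N_one _ N hN)). rewrite gmul1g in H. lra.
Qed.

Lemma hom_pow phi x k : invariant_hom G N phi -> N x -> phi (gpow G x k) = INR k * phi x.
Proof.
  intros Hp Hx. induction k; simpl.
  - rewrite (hom_one phi Hp). ring.
  - destruct Hp as [Ha _]. rewrite Ha; auto. rewrite IHk. destruct k; simpl; ring.
    apply (sub_gpow G N (proj1 hN)); auto.
Qed.

Lemma hqm_pow psi x k : invariant_hqm G N psi -> N x -> psi (gpow G x k) = INR k * psi x.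
Proof.
  intros [_ [Hh _]] Hx. rewrite <- zpow_of_nat, Hh by auto. rewrite INR_IZR_INZ. reflexivity.
Qed.

Lemma final_step (L : G -> Prop) v (b : Gam -> Gam -> R) t (b' : Gam -> R) m2 (c2 : nat -> Gam -> Gam -> R) :
  invariant_hqm G N v -> bounded2 Gam b -> in_transgression_image G Gam N pi t ->
  (forall x y, upsi G Gam pi v x y = b x y + fsum m2 (fun i => 0 * c2 i x y) + t x y + cob1 Gam b' x y) ->
  exists h phi, invariant_hom G N h /\ invariant_hqm G L phi /\ forall x, N x -> v x = h x + phi x.
Proof.
  intros Hv [M HM] [phi [Hphi [ft [Hft1 Hft2]]]] Eq.
  destruct Hv as [[D HD] [Hh Hinv]].
  set (F := fun g => fpsi G Gam pi v g + ft g + b' (pi g)).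
  assert (hF : forall x y, Rabs (F (gmul x y) - F x - F y) <= 2 * D + M).
  { intros x y. pose proof (beta_bound G Gam N pi hN hpi v D HD Hinv x y) as Hb.
    pose proof (Eq (pi x) (pi y)) as E. rewrite fsum_zero' in E. rewrite Hft2 in E.
    pose proof (HM (pi x) (pi y)) as Hm.
    unfold F. rewrite (proj1 hpi). unfold beta, cob1 in *.
    apply abs_le_iff in Hb, Hm. apply abs_le_iff. lra. }
  exists (fun x => - phi x), (Hb G F). split; [|split].
  - destruct Hphi as [Ha Hi]. split; intros; [rewrite Ha by auto; ring | rewrite Hi by auto; ring].
  - apply (hb_hqm G F (2 * D + M) hF).
  - intros x Hx. assert (Hbx : Hb G F x = v x + phi x); [|lra].
    apply hb_char.
    set (s1 := ginv (sec G Gam pi gone)).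
    assert (Ns1 : N s1).
    { apply (N_inv G N hN). apply (proj2 (proj2 hpi)). apply (pi_sec G Gam N pi hpi). }
    exists (D + Rabs (v s1) + Rabs (ft gone) + Rabs (b' gone)). intro n.
    set (y := gpow G x (2 ^ n)).
    assert (Ny : N y) by (apply (sub_gpow G N (proj1 hN)); auto).
    assert (piy : pi y = gone) by (apply (proj2 (proj2 hpi)); auto).
    unfold F, fpsi, ng. rewrite piy. fold s1.
    rewrite <- (mulg1 G y) at 2. rewrite Hft1 by auto.
    pose proof (HD y s1 Ny Ns1) as H1.
    assert (Ev : v y = 2 ^ n * v x) by (unfold y; rewrite hqm_pow, INR_pow2; auto; split; [exists D|]; auto).
    assert (Ep : phi y = 2 ^ n * phi x) by (unfold y; rewrite hom_pow, INR_pow2; auto).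
    pose proof (Rle_abs (v s1)). pose proof (Rle_abs (- v s1)). rewrite Rabs_Ropp in H0.
    pose proof (Rle_abs (ft gone)). pose proof (Rle_abs (- ft gone)). rewrite Rabs_Ropp in H3.
    pose proof (Rle_abs (b' gone)). pose proof (Rle_abs (- b' gone)). rewrite Rabs_Ropp in H5.
    apply abs_le_iff in H1. apply abs_le_iff. lra.
Qed.

End Fin.
Arguments gmulA {_}. Arguments gmul1g {_}. Arguments gmulVg {_}.

Definition P3 (Gam : Group) : Prop :=
  exists (m : nat) (c : nat -> Gam -> Gam -> Gam -> R),
    forall z, bounded3 Gam z -> cocycle3 Gam z ->
      (exists u, forall g h k, z g h k = cob2 Gam u g h k) ->
      exists (a : nat -> R) (b : Gam -> Gam -> R), bounded2 Gam b /\
        forall g h k, z g h k = fsum m (fun i => a i * c i g h k) + cob2 Gam b g h k.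

Lemma fsum_lin2 m c (a b d : nat -> R) :
  fsum m (fun i => (c * a i + b i) * d i) = c * fsum m (fun i => a i * d i) + fsum m (fun i => b i * d i).
Proof. induction m; simpl. ring. rewrite IHm. ring. Qed.

Lemma V_fsum (X : Type) (V : (X -> R) -> Prop) :
  (forall v w a, V v -> V w -> V (fun x => a * v x + w x)) ->
  forall (vs : nat -> X -> R), (forall j, V (vs j)) ->
  forall k lam v, V v -> V (fun x => v x - fsum k (fun j => lam j * vs j x)).
Proof.
  intros Vlin vs Hvs k lam v Hv. induction k.
  - simpl. replace (fun x => v x - 0) with v; auto. apply functional_extensionality; intro; ring.
  - replace (fun x => v x - fsum (S k) (fun j => lam j * vs j x))
      with (fun x => (- lam k) * vs k x + (v x - fsum k (fun j => lam j * vs j x))).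
    apply Vlin; auto. apply functional_extensionality; intro; simpl; ring.
Qed.

Section Asm.
Variables G Gam : Group.
Variable N : G -> Prop.
Variable pi : G -> Gam.
Hypothesis hN : is_normal G N.
Hypothesis hpi : quotient_map G Gam N pi.

Lemma hqm_lin (L : G -> Prop) v w a : invariant_hqm G L v -> invariant_hqm G L w ->
  invariant_hqm G L (fun x => a * v x + w x).
Proof.
  intros [[D1 H1] [Hh1 Hi1]] [[D2 H2] [Hh2 Hi2]]. split; [|split].
  - exists (Rabs a * D1 + D2). intros x y Hx Hy.
    replace (a * v (gmul x y) + w (gmul x y) - (a * v x + w x) - (a * v y + w y))
      with (a * (v (gmul x y) - v x - v y) + (w (gmul x y) - w x - w y)) by ring.
    eapply Rle_trans. apply Rabs_triang. rewrite Rabs_mult.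
    apply Rplus_le_compat; auto. apply Rmult_le_compat_l; auto. apply Rabs_pos.
  - intros x z Hx. rewrite Hh1, Hh2 by auto. ring.
  - intros g x Hx. rewrite Hi1, Hi2 by auto. reflexivity.
Qed.

Lemma hqm_zero (L : G -> Prop) : invariant_hqm G L (fun _ => 0).
Proof.
  split; [|split]. exists 0. intros. rewrite Rabs_pos_eq; lra.
  intros; ring. reflexivity.
Qed.

Lemma hom_lin v w a : invariant_hom G N v -> invariant_hom G N w ->
  invariant_hom G N (fun x => a * v x + w x).
Proof.
  intros [Ha1 Hi1] [Ha2 Hi2]. split.
  - intros x y Hx Hy. rewrite Ha1, Ha2 by auto. ring.
  - intros g x Hx. rewrite Hi1, Hi2 by auto. reflexivity.
Qed.

Lemma trans_lin t1 t2 a : in_transgression_image G Gam N pi t1 -> in_transgression_image G Gam N pi t2 ->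
  in_transgression_image G Gam N pi (fun x y => a * t1 x y + t2 x y).
Proof.
  intros [p1 [Hp1 [f1 [A1 B1]]]] [p2 [Hp2 [f2 [A2 B2]]]].
  exists (fun x => a * p1 x + p2 x). split. apply hom_lin; auto.
  exists (fun x => a * f1 x + f2 x). split.
  - intros n g Hn. rewrite A1, A2 by auto. ring.
  - intros g h. rewrite B1, B2. unfold cob1. ring.
Qed.

Lemma main_W : P3 Gam -> findim_H2_mod_d2 G Gam N pi -> forall L, findim_W G L N.
Proof.
  intros [m [c Hc]] [m2 [c2 [_ Hc2]]] L.
  set (V1 := invariant_hqm G N).
  assert (V1lin : forall v w a, V1 v -> V1 w -> V1 (fun x => a * v x + w x)) by (intros; apply hqm_lin; auto).
  assert (V10 : V1 (fun _ => 0)) by apply hqm_zero.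
  set (R1 := fun (v : G -> R) (a : nat -> R) => exists b, bounded2 Gam b /\
     forall x y z, cob2 Gam (upsi G Gam pi v) x y z = fsum m (fun i => a i * c i x y z) + cob2 Gam b x y z).
  assert (R1lin : forall v w a b c', R1 v a -> R1 w b -> R1 (fun x => c' * v x + w x) (fun i => c' * a i + b i)).
  { intros v w a b c' [b1 [[M1 HM1] E1]] [b2 [[M2 HM2] E2]].
    exists (fun x y => c' * b1 x y + b2 x y). split.
    - exists (Rabs c' * M1 + M2). intros x y. eapply Rle_trans. apply Rabs_triang. rewrite Rabs_mult.
      apply Rplus_le_compat; auto. apply Rmult_le_compat_l; auto. apply Rabs_pos.
    - intros x y z. rewrite fsum_lin2.
      transitivity (c' * cob2 Gam (upsi G Gam pi v) x y z + cob2 Gam (upsi G Gam pi w) x y z).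
      { unfold cob2, upsi. ring. }
      rewrite E1, E2. unfold cob2. ring. }
  destruct (span_lemma G V1 V10 V1lin m R1 R1lin) as [k1 [vs1 [Hvs1 H1]]].
  { intros v [[D HD] [Hh Hinv]].
    destruct (Hc (cob2 Gam (upsi G Gam pi v))) as [a [b [Hb E]]].
    - exists (8 * D). apply (cob2_u_bound G Gam N pi hN hpi v D HD Hinv).
    - intros x y z w. apply cob3_cob2.
    - exists (upsi G Gam pi v). reflexivity.
    - exists (fun i => if Nat.ltb i m then a i else 0). split.
      + exists b. split; auto. intros x y z. rewrite E. f_equal. apply fsum_ext.
        intros i Hi. apply Nat.ltb_lt in Hi. rewrite Hi. reflexivity.
      + intros i Hi. assert (Nat.ltb i m = false) as -> by (apply Nat.ltb_ge; lia). reflexivity. }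
  set (V2 := fun v => V1 v /\ R1 v (fun _ => 0)).
  assert (V2lin : forall v w a, V2 v -> V2 w -> V2 (fun x => a * v x + w x)).
  { intros v w a [A1 B1] [A2 B2]. split; auto.
    pose proof (R1lin _ _ _ _ a B1 B2) as H.
    replace (fun _ : nat => 0) with (fun i : nat => a * 0 + 0). exact H.
    apply functional_extensionality; intro; ring. }
  assert (V20 : V2 (fun _ => 0)).
  { split; auto. exists (fun _ _ => 0). split.
    - exists 0. intros. rewrite Rabs_R0. lra.
    - intros. rewrite fsum_zero'. unfold cob2, upsi. ring. }
  set (R2 := fun (v : G -> R) (a : nat -> R) => exists b t b', bounded2 Gam b /\
     in_transgression_image G Gam N pi t /\
     forall x y, upsi G Gam pi v x y = b x y + fsum m2 (fun i => a i * c2 i x y) + t x y + cob1 Gam b' x y).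
  assert (R2lin : forall v w a b c', R2 v a -> R2 w b -> R2 (fun x => c' * v x + w x) (fun i => c' * a i + b i)).
  { intros v w a b c' [b1 [t1 [b1' [[M1 HM1] [T1 E1]]]]] [b2 [t2 [b2' [[M2 HM2] [T2 E2]]]]].
    exists (fun x y => c' * b1 x y + b2 x y), (fun x y => c' * t1 x y + t2 x y), (fun x => c' * b1' x + b2' x).
    split; [|split].
    - exists (Rabs c' * M1 + M2). intros x y. eapply Rle_trans. apply Rabs_triang. rewrite Rabs_mult.
      apply Rplus_le_compat; auto. apply Rmult_le_compat_l; auto. apply Rabs_pos.
    - apply trans_lin; auto.
    - intros x y. rewrite fsum_lin2. unfold upsi in *. rewrite E1, E2. unfold cob1. ring. }
  destruct (span_lemma G V2 V20 V2lin m2 R2 R2lin) as [k2 [vs2 [Hvs2 H2]]].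
  { intros v [Vv [b [[M HM] E]]].
    destruct (Hc2 (fun x y => upsi G Gam pi v x y - b x y)) as [a [t [b' [T E2]]]].
    - intros x y z. specialize (E x y z). rewrite fsum_zero' in E. unfold cob2 in *. lra.
    - exists (fun i => if Nat.ltb i m2 then a i else 0). split.
      + exists b, t, b'. split; [exists M; auto|]. split; auto. intros x y. specialize (E2 x y).
        rewrite (fsum_ext m2 (fun i => (if Nat.ltb i m2 then a i else 0) * c2 i x y) (fun i => a i * c2 i x y)).
        lra. intros i Hi. apply Nat.ltb_lt in Hi. rewrite Hi. reflexivity.
      + intros i Hi. assert (Nat.ltb i m2 = false) as -> by (apply Nat.ltb_ge; lia). reflexivity. }
  exists (k1 + k2)%nat, (fun i => if Nat.ltb i k1 then vs1 i else vs2 (i - k1)%nat). split.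
  { intro i. destruct (Nat.ltb i k1); [apply Hvs1 | apply Hvs2]. }
  intros psi0 Hpsi0.
  destruct (H1 psi0 Hpsi0) as [lam1 HR1].
  set (psi1 := fun x => psi0 x - fsum k1 (fun j => lam1 j * vs1 j x)).
  assert (V2 psi1) as Hpsi1.
  { split; auto. apply V_fsum; auto. }
  destruct (H2 psi1 Hpsi1) as [lam2 HR2].
  set (psi2 := fun x => psi1 x - fsum k2 (fun j => lam2 j * vs2 j x)).
  assert (V1 psi2) as Vpsi2.
  { apply V_fsum; auto. intro j. apply Hvs2. apply Hpsi1. }
  destruct HR2 as [b [t [b' [Hb [T E]]]]].
  destruct (final_step G Gam N pi hN hpi L psi2 b t b' m2 c2 Vpsi2 Hb T) as [h [phi [Hh [Hphi Ex]]]].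
  { intros x y. apply E. }
  exists (fun i => if Nat.ltb i k1 then lam1 i else lam2 (i - k1)%nat), h, phi.
  split; [|split]; auto.
  intros x Hx. specialize (Ex x Hx). unfold psi2, psi1 in Ex.
  rewrite fsum_split.
  rewrite (fsum_ext k1 _ (fun j => lam1 j * vs1 j x)).
  2:{ intros i Hi. apply Nat.ltb_lt in Hi. rewrite Hi. reflexivity. }
  rewrite (fsum_ext k2 _ (fun j => lam2 j * vs2 j x)).
  2:{ intros i Hi. assert (Nat.ltb (k1 + i) k1 = false) as -> by (apply Nat.ltb_ge; lia).
      replace (k1 + i - k1)%nat with i by lia. reflexivity. }
  lra.
Qed.

End Asm.

Lemma H2_to_mod (G Gam : Group) (N : G -> Prop) (pi : G -> Gam) :
  findim_H2 Gam -> findim_H2_mod_d2 G Gam N pi.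
Proof.
  intros [m [c [Hc H]]]. exists m, c. split; auto. intros z Hz.
  destruct (H z Hz) as [a [b E]]. exists a, (fun _ _ => 0), b. split.
  - exists (fun _ => 0). split. split; intros; ring.
    exists (fun _ => 0). split. intros; ring. intros; unfold cob1; ring.
  - intros g h. rewrite E. ring.
Qed.

Theorem proposition5p6 (G Gam : Group) (N : G -> Prop) (pi : G -> Gam)
  (hN : is_normal G N) (hpi : quotient_map G Gam N pi) :
  ((findim_ker_c3 Gam /\ findim_H2_mod_d2 G Gam N pi) ->
     forall L : G -> Prop, is_normal G L -> (forall x, N x -> L x) ->
       findim_W G L N) /\
  ((findim_H3b Gam /\ findim_H2 Gam) ->
     forall L : G -> Prop, is_normal G L -> (forall x, N x -> L x) ->
       findim_W G L N).
Proof.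
  split.
  - intros [[m [c [_ Hc]]] H2] L _ _. apply (main_W G Gam N pi hN hpi); auto.
    exists m, c. exact Hc.
  - intros [[m [c [_ Hc]]] H2] L _ _. apply (main_W G Gam N pi hN hpi).
    + exists m, c. intros z Hb Hz _. apply Hc; auto.
    + apply H2_to_mod; auto.
Qed.
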